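(* Let $\mu>0$. For every $n\in\mathbb{N}$ with $n>1$ and every $f\in C([0,1])$, $$\|\mathscr{L}_n^K f-f\|_\infty\le \omega\!\left(f_\mu,\tfrac{1}{\sqrt{n+1}}\right)\ln(2+\mu)\left\{1+\frac{1}{2\sqrt{n+1}}+\sqrt2\right\}+\omega(f_\mu,\gamma_n)\ln(2+\mu),$$ where $\gamma_n:=\max_{x\in[0,1]}|a_{n+1}(x)-x|$.
   Context: Fix $\mu>0$. Let $\ln_\mu(x):=\ln(1+\mu+x)$ for $x\in[0,1]$, and for $f:[0,1]\to\mathbb{R}$ let $f_\mu(x):=f(x)/\ln_\mu(x)$. Let $p_{n,k}(y):=\binom{n}{k}y^k(1-y)^{n-k}$ and $a_{n+1}(x):=\dfrac{\ln\left(1+\frac{x}{(n+1)(1+\mu)}\right)}{\ln\left(1+\frac{1}{(n+1)(1+\mu)}\right)}$, $x\in[0,1]$. For $n\in\mathbb{N}$ define $\mathscr{L}_n^K f(x):=\ln_\mu(x)\sum_{k=0}^n p_{n,k}(a_{n+1}(x))\,(n+1)\int_{k/(n+1)}^{(k+1)/(n+1)} f_\mu(t)\,dt$, $x\in[0,1]$. For $g\in C([0,1])$ and $\delta>0$, $\omega(g,\delta):=\sup\{|g(t)-g(x)|: x,t\in[0,1],\ |t-x|\le\delta\}$; $\|\cdot\|_\infty$ is the sup norm on $[0,1]$. *)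

(* Defs.v *)
From Stdlib Require Import Reals.
From Coquelicot Require Import Coquelicot.
Open Scope R_scope.

Definition ln_mu (mu x : R) : R := ln (1 + mu + x).

Definition f_mu (mu : R) (f : R -> R) (x : R) : R := f x / ln_mu mu x.

Definition p_nk (n k : nat) (y : R) : R := Binomial.C n k * y ^ k * (1 - y) ^ (n - k).

Definition a_np1 (mu : R) (n : nat) (x : R) : R :=
  ln (1 + x / (INR (n + 1) * (1 + mu))) / ln (1 + 1 / (INR (n + 1) * (1 + mu))).

Definition LK (mu : R) (n : nat) (f : R -> R) (x : R) : R :=
  ln_mu mu x *
  sum_f_R0 (fun k => p_nk n k (a_np1 mu n x) *
                     (INR (n + 1) * RInt (f_mu mu f) (INR k / INR (n + 1))
                                                     (INR (k + 1) / INR (n + 1))))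
           n.

Definition I01 (x : R) : Prop := 0 <= x <= 1.

Definition omega (g : R -> R) (delta : R) : R :=
  real (Lub_Rbar (fun r => exists x t, I01 x /\ I01 t /\ Rabs (t - x) <= delta /\
                                       r = Rabs (g t - g x))).

(* gamma_n = max_{x in [0,1]} |a_{n+1}(x) - x|  (a sup of a continuous function
   on a compact set, hence attained) *)
Definition gamma_n (mu : R) (n : nat) : R :=
  real (Lub_Rbar (fun r => exists x, I01 x /\ r = Rabs (a_np1 mu n x - x))).

Definition cont01 (f : R -> R) : Prop :=
  forall x, I01 x -> filterlim f (within I01 (locally x)) (locally (f x)).

(* Main.v *)
Require Import Defs.
From Stdlib Require Import Reals Lra Lia Psatz.
From Coquelicot Require Import Coquelicot.
Open Scope R_scope.

Lemma C_shift (m j : nat) : (j <= m)%nat ->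
  INR (S j) * Binomial.C (S m) (S j) = INR (S m) * Binomial.C m j.
Proof.
  intros Hj. unfold Binomial.C.
  replace (S m - S j)%nat with (m - j)%nat by lia.
  change (Factorial.fact (S m)) with (S m * Factorial.fact m)%nat.
  change (Factorial.fact (S j)) with (S j * Factorial.fact j)%nat.
  rewrite !mult_INR.
  assert (H1 := INR_fact_neq_0 m). assert (H2 := INR_fact_neq_0 j).
  assert (H3 := INR_fact_neq_0 (m - j)).
  assert (H4 : INR (S j) <> 0) by (apply not_0_INR; lia).
  field. repeat split; auto.
Qed.

Lemma bern_sum1 (n : nat) (y : R) : sum_f_R0 (fun k => p_nk n k y) n = 1.
Proof.
  unfold p_nk. rewrite <- binomial. replace (y + (1 - y)) with 1 by ring. apply pow1.
Qed.

Lemma bern_shift (m : nat) (h : nat -> R) (y : R) :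
  sum_f_R0 (fun k => INR k * h k * p_nk (S m) k y) (S m) =
  INR (S m) * y * sum_f_R0 (fun j => h (S j) * p_nk m j y) m.
Proof.
  rewrite decomp_sum by lia. simpl pred.
  rewrite Rmult_0_l, !Rmult_0_l, Rplus_0_l.
  rewrite scal_sum.
  apply sum_eq. intros i Hi. unfold p_nk.
  replace (S m - S i)%nat with (m - i)%nat by lia.
  assert (E := C_shift m i Hi).
  replace (INR (S i) * h (S i) * (Binomial.C (S m) (S i) * y ^ S i * (1 - y) ^ (m - i)))
    with ((INR (S i) * Binomial.C (S m) (S i)) * h (S i) * y ^ S i * (1 - y) ^ (m - i)) by ring.
  rewrite E. simpl. ring.
Qed.

Lemma bern_m1 (n : nat) (y : R) :
  sum_f_R0 (fun k => INR k * p_nk n k y) n = INR n * y.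
Proof.
  destruct n as [|m].
  - simpl. ring.
  - transitivity (sum_f_R0 (fun k => INR k * (fun _ => 1) k * p_nk (S m) k y) (S m)).
    + apply sum_eq; intros; ring.
    + rewrite bern_shift.
      transitivity (INR (S m) * y * sum_f_R0 (fun k => p_nk m k y) m).
      * f_equal. apply sum_eq; intros; ring.
      * rewrite bern_sum1. ring.
Qed.

Lemma bern_m2 (n : nat) (y : R) :
  sum_f_R0 (fun k => INR k * (INR k - 1) * p_nk n k y) n = INR n * (INR n - 1) * y ^ 2.
Proof.
  destruct n as [|m].
  - simpl. ring.
  - rewrite bern_shift.
    transitivity (INR (S m) * y * sum_f_R0 (fun k => INR k * p_nk m k y) m).
    + f_equal. apply sum_eq; intros. rewrite S_INR. ring.
    + rewrite bern_m1. rewrite S_INR. ring.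
Qed.

Lemma sum_lin3 (A B C0 : nat -> R) (a b c : R) (n : nat) :
  sum_f_R0 (fun k => a * A k + b * B k + c * C0 k) n =
  a * sum_f_R0 A n + b * sum_f_R0 B n + c * sum_f_R0 C0 n.
Proof.
  induction n; simpl; [ring| rewrite IHn; ring].
Qed.

Lemma bern_Q (n : nat) (y : R) : (1 <= n)%nat -> 0 <= y <= 1 ->
  sum_f_R0 (fun k => p_nk n k y *
     ((INR k / INR (n + 1) - y) ^ 2 + (INR (k + 1) / INR (n + 1) - y) ^ 2)) n
  <= 1 / (2 * INR (n + 1)).
Proof.
  intros Hn1 Hy. assert (Hn1' : 1 <= INR n) by (apply (le_INR 1); lia).
  set (N := INR (n + 1)).
  assert (HN : N = INR n + 1) by (unfold N; rewrite plus_INR; simpl; ring).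
  assert (Hn0 : 0 <= INR n) by apply pos_INR.
  assert (HNp : 0 < N) by lra.
  transitivity (sum_f_R0 (fun k => (2 / N ^ 2) * (INR k * (INR k - 1) * p_nk n k y)
       + ((2 - 4 * N * y) / N ^ 2 + 2 / N ^ 2) * (INR k * p_nk n k y)
       + ((1 - 2 * N * y + 2 * N ^ 2 * y ^ 2) / N ^ 2) * p_nk n k y) n).
  { right. apply sum_eq. intros i _. rewrite plus_INR. fold N. change (INR 1) with 1.
    unfold Rdiv. field. lra. }
  rewrite sum_lin3, bern_m2, bern_m1, bern_sum1.

  apply Rmult_le_reg_r with (2 * N ^ 2). nra.
  replace (1 / (2 * N) * (2 * N ^ 2)) with N by (field; lra).
  replace ((2 / N ^ 2 * (INR n * (INR n - 1) * y ^ 2) +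
   ((2 - 4 * N * y) / N ^ 2 + 2 / N ^ 2) * (INR n * y) +
   (1 - 2 * N * y + 2 * N ^ 2 * y ^ 2) / N ^ 2 * 1) * (2 * N ^ 2))
   with (2 * (2 * (INR n * (INR n - 1) * y ^ 2) + ((2 - 4 * N * y) + 2) * (INR n * y) +
   (1 - 2 * N * y + 2 * N ^ 2 * y ^ 2))) by (field; lra).
  rewrite HN. assert (0 <= y * (1 - y)) by nra. assert (0 <= (INR n - 1) * (1 - 2*y)^2) by (apply Rmult_le_pos; [lra|apply pow2_ge_0]). nra.
Qed.

Lemma lub_ge (E : R -> Prop) (r M : R) : E r -> (forall s, E s -> s <= M) ->
  r <= real (Lub_Rbar E).
Proof.
  intros Hr HM. destruct (Lub_Rbar_correct E) as [H1 H2].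
  assert (A1 := H1 r Hr).
  assert (A2 : Rbar_le (Lub_Rbar E) M) by (apply H2; intros s Hs; apply HM, Hs).
  destruct (Lub_Rbar E); simpl in *; try contradiction; auto.
Qed.

Definition clamp (t : R) : R := Rmax 0 (Rmin 1 t).

Lemma clamp_I01 t : I01 (clamp t).
Proof. unfold clamp, I01, Rmax, Rmin. repeat destruct Rle_dec; lra. Qed.

Lemma clamp_id t : I01 t -> clamp t = t.
Proof. unfold clamp, I01, Rmax, Rmin. intros. repeat destruct Rle_dec; lra. Qed.

Lemma clamp_lip a b : Rabs (clamp a - clamp b) <= Rabs (a - b).
Proof. unfold clamp, Rmax, Rmin. repeat destruct Rle_dec; unfold Rabs; repeat destruct Rcase_abs; lra. Qed.

Lemma clamp_within z : filterlim clamp (locally z) (within I01 (locally (clamp z))).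
Proof.
  intros P [eps Heps]. exists eps. intros t Ht. apply Heps.
  - change (Rabs (clamp t - clamp z) < eps).
    change (Rabs (t - z) < eps) in Ht. eapply Rle_lt_trans; [apply clamp_lip|exact Ht].
  - apply clamp_I01.
Qed.

Lemma clamp_cont z : continuous clamp z.
Proof.
  eapply filterlim_filter_le_2; [apply filter_le_within|apply clamp_within].
Qed.

Definition hext (mu : R) (f : R -> R) (t : R) : R := f_mu mu f (clamp t).

Lemma ln_mu_pos mu x : 0 < mu -> I01 x -> 0 < ln_mu mu x.
Proof.
  intros Hmu [H0 H1]. unfold ln_mu. rewrite <- ln_1. apply ln_increasing; lra.
Qed.

Lemma ln_mu_le mu x : 0 < mu -> I01 x -> ln_mu mu x <= ln (2 + mu).
Proof.
  intros Hmu [H0 H1]. unfold ln_mu. apply ln_le; lra.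
Qed.

Lemma hext_cont mu f : 0 < mu -> cont01 f -> forall z, continuous (hext mu f) z.
Proof.
  intros Hmu hf z. unfold hext, f_mu.
  apply (continuous_mult (fun t => f (clamp t)) (fun t => / ln_mu mu (clamp t))).
  - eapply filterlim_comp; [apply clamp_within| apply hf, clamp_I01].
  - apply continuous_Rinv_comp.
    + apply (continuous_comp clamp (fun u => ln_mu mu u)); [apply clamp_cont|].
      unfold ln_mu.
      apply (continuous_comp (fun u => 1 + mu + u) ln).
      * apply (continuous_plus (fun _ => 1 + mu) (fun u => u)).
        apply continuous_const. apply continuous_id.
      * apply continuous_ln. assert (H := clamp_I01 z). destruct H; lra.
    + apply Rgt_not_eq, ln_mu_pos; auto; apply clamp_I01.
Qed.

Lemma g_bounded mu f : 0 < mu -> cont01 f ->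
  exists M, forall t, I01 t -> Rabs (f_mu mu f t) <= M.
Proof.
  intros Hmu hf.
  assert (Hc : forall c, 0 <= c <= 1 -> continuity_pt (hext mu f) c).
  { intros c _. apply continuity_pt_filterlim, hext_cont; auto. }
  destruct (continuity_ab_maj _ 0 1 ltac:(lra) Hc) as [a [Ha _]].
  destruct (continuity_ab_min _ 0 1 ltac:(lra) Hc) as [b [Hb _]].
  exists (Rabs (hext mu f a) + Rabs (hext mu f b)).
  intros t Ht. assert (E : f_mu mu f t = hext mu f t) by (unfold hext; rewrite clamp_id; auto).
  rewrite E. specialize (Ha t Ht). specialize (Hb t Ht).
  unfold Rabs at 1 2 3. repeat destruct Rcase_abs; lra.
Qed.

Section Om.
Variable G : R -> R.
Variable M : R.
Hypothesis HM : forall t, I01 t -> Rabs (G t) <= M.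

Lemma omega_ge d s t : I01 s -> I01 t -> Rabs (t - s) <= d -> Rabs (G t - G s) <= omega G d.
Proof.
  intros Hs Ht Hd. unfold omega. apply lub_ge with (M := M + M).
  - exists s, t. auto.
  - intros r [x [u [Hx [Hu [_ ->]]]]].
    assert (A1 := HM x Hx). assert (A2 := HM u Hu).
    unfold Rabs in *. repeat destruct Rcase_abs; lra.
Qed.

Lemma omega_nonneg d : 0 <= d -> 0 <= omega G d.
Proof.
  intros Hd. eapply Rle_trans; [apply Rabs_pos|].
  apply (omega_ge d 0 0); unfold I01; try lra. rewrite Rminus_0_r, Rabs_R0. lra.
Qed.

Lemma omega_chain d (Hd : 0 < d) : forall m s t, I01 s -> I01 t ->
  Rabs (t - s) <= (INR m + 1) * d -> Rabs (G t - G s) <= (INR m + 1) * omega G d.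
Proof.
  assert (Hw := omega_nonneg d ltac:(lra)).
  induction m as [|m IH]; intros s t Hs Ht Hts.
  - simpl in *. rewrite Rplus_0_l, Rmult_1_l in *. apply omega_ge; auto.
  - rewrite S_INR in *.
    destruct (Rle_dec (Rabs (t - s)) ((INR m + 1) * d)) as [Hle|Hgt].
    + assert (A := IH s t Hs Ht Hle). lra.
    + set (u := if Rle_dec s t then t - d else t + d).
      assert (Hu : I01 u /\ Rabs (u - s) <= (INR m + 1) * d /\ Rabs (t - u) <= d).
      { unfold u. destruct Hs, Ht. assert (0 <= INR m) by apply pos_INR.
        destruct Rle_dec; unfold I01; unfold Rabs in *; repeat destruct Rcase_abs; nra. }
      destruct Hu as [Hu [Hu1 Hu2]].
      assert (A := IH s u Hs Hu Hu1). assert (B := omega_ge d u t Hu Ht Hu2).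
      replace (G t - G s) with ((G t - G u) + (G u - G s)) by ring.
      eapply Rle_trans; [apply Rabs_triang|]. lra.
Qed.

Lemma omega_quad d (Hd : 0 < d) s t : I01 s -> I01 t ->
  Rabs (G t - G s) <= omega G d * (1 + (t - s) ^ 2 / d ^ 2).
Proof.
  intros Hs Ht.
  assert (Hw := omega_nonneg d ltac:(lra)).
  set (q := Rabs (t - s) / d).
  assert (Hq : 0 <= q) by (unfold q; apply Rmult_le_pos; [apply Rabs_pos| apply Rlt_le, Rinv_0_lt_compat; lra]).
  destruct (nfloor_ex q Hq) as [m [Hm1 Hm2]].
  assert (Hts : Rabs (t - s) <= (INR m + 1) * d).
  { unfold q in Hm2. apply Rlt_le. apply Rmult_lt_reg_r with (/ d). apply Rinv_0_lt_compat; lra.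
    rewrite Rmult_assoc, Rinv_r, Rmult_1_r by lra. exact Hm2. }
  assert (A := omega_chain d Hd m s t Hs Ht Hts).
  eapply Rle_trans; [exact A|]. rewrite (Rmult_comm (omega G d)). apply Rmult_le_compat_r; auto.
  assert (Eq : (t - s) ^ 2 / d ^ 2 = q ^ 2).
  { unfold q. rewrite <- (pow2_abs (t - s)). unfold Rdiv. rewrite Rpow_mult_distr, pow_inv. reflexivity. }
  rewrite Eq.
  destruct m as [|m'].
  - simpl. nra.
  - rewrite S_INR in *. assert (0 <= INR m') by apply pos_INR. nra.
Qed.
End Om.

Lemma int_step mu f (hmu : 0 < mu) (hf : cont01 f) a b N G Bd :
  0 <= a -> a <= b -> b <= 1 -> 0 < N -> b - a = 1 / N ->
  (forall t, a <= t <= b -> Rabs (f_mu mu f t - G) <= Bd) ->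
  Rabs (N * RInt (f_mu mu f) a b - G) <= Bd.
Proof.
  intros Ha Hab Hb HN Hba Hbd.
  assert (Hex : ex_RInt (f_mu mu f) a b).
  { apply ex_RInt_ext with (hext mu f).
    - intros z Hz. rewrite Rmin_left, Rmax_right in Hz by lra.
      unfold hext. rewrite clamp_id; auto. unfold I01; lra.
    - apply (@ex_RInt_continuous R_CompleteNormedModule). intros z _. apply hext_cont; auto. }
  assert (E : RInt (fun t => f_mu mu f t - G) a b = RInt (f_mu mu f) a b - (b - a) * G).
  { replace ((b - a) * G) with (RInt (fun _ => G) a b) by (rewrite RInt_const; reflexivity).
    exact (@RInt_minus R_CompleteNormedModule (f_mu mu f) (fun _ => G) a b Hex (ex_RInt_const a b G)). }
  assert (Hle := abs_RInt_le_const (fun t => f_mu mu f t - G) a b Bd Hab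
     (@ex_RInt_minus R_NormedModule _ _ a b Hex (ex_RInt_const a b G)) Hbd).
  rewrite E, Hba in Hle.
  replace (N * RInt (f_mu mu f) a b - G) with (N * (RInt (f_mu mu f) a b - 1 / N * G)) by (field; lra).
  rewrite Rabs_mult, Rabs_pos_eq by lra.
  apply Rmult_le_reg_l with (1 / N). apply Rdiv_lt_0_compat; lra.
  replace (1 / N * (N * Rabs (RInt (f_mu mu f) a b - 1 / N * G))) with (Rabs (RInt (f_mu mu f) a b - 1 / N * G)) by (field; lra).
  exact Hle.
Qed.

Lemma a_I01 mu n x : 0 < mu -> I01 x -> I01 (a_np1 mu n x).
Proof.
  intros Hmu [H0 H1]. unfold a_np1.
  set (D := INR (n + 1) * (1 + mu)).
  assert (HD : 0 < D) by (unfold D; apply Rmult_lt_0_compat; [apply lt_0_INR; lia| lra]).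
  assert (Hxd : 0 <= x / D <= 1 / D).
  { unfold Rdiv; split; [apply Rmult_le_pos; [lra| apply Rlt_le, Rinv_0_lt_compat; lra]|
      apply Rmult_le_compat_r; [apply Rlt_le, Rinv_0_lt_compat; lra| lra]]. }
  assert (L0 : 0 <= ln (1 + x / D)) by (rewrite <- ln_1; apply ln_le; lra).
  assert (L1 : ln (1 + x / D) <= ln (1 + 1 / D)) by (apply ln_le; lra).
  assert (L2 : 0 < ln (1 + 1 / D)).
  { rewrite <- ln_1; apply ln_increasing; [lra|]. assert (0 < 1 / D) by (apply Rdiv_lt_0_compat; lra). lra. }
  unfold I01; split.
  - apply Rdiv_le_0_compat; lra.
  - apply Rmult_le_reg_r with (ln (1 + 1 / D)); auto.
    unfold Rdiv. rewrite Rmult_assoc, Rinv_l, Rmult_1_r, Rmult_1_l by lra. exact L1.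
Qed.

Lemma C_nonneg n k : 0 <= Binomial.C n k.
Proof.
  unfold Binomial.C. apply Rmult_le_pos; [apply pos_INR|].
  apply Rlt_le, Rinv_0_lt_compat, Rmult_lt_0_compat; apply INR_fact_lt_0.
Qed.

Lemma p_nonneg n k y : 0 <= y <= 1 -> 0 <= p_nk n k y.
Proof.
  intros Hy. unfold p_nk. apply Rmult_le_pos; [apply Rmult_le_pos|].
  apply C_nonneg. apply pow_le; lra. apply pow_le; lra.
Qed.

Lemma sum_sub_c (A B : nat -> R) (c : R) n :
  sum_f_R0 (fun k => A k * (B k - c)) n = sum_f_R0 (fun k => A k * B k) n - c * sum_f_R0 A n.
Proof. induction n; simpl; [ring| rewrite IHn; ring]. Qed.

Theorem theorem6p1 (mu : R) (hmu : 0 < mu) (n : nat) (hn : (1 < n)%nat)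
  (f : R -> R) (hf : cont01 f) :
  forall x, I01 x ->
    Rabs (LK mu n f x - f x) <=
      omega (f_mu mu f) (1 / sqrt (INR (n + 1))) * ln (2 + mu) *
        (1 + 1 / (2 * sqrt (INR (n + 1))) + sqrt 2)
      + omega (f_mu mu f) (gamma_n mu n) * ln (2 + mu).
Proof.
  intros x Hx.
  set (g := f_mu mu f).
  set (N := INR (n + 1)).
  assert (HN : N = INR n + 1) by (unfold N; rewrite plus_INR; simpl; ring).
  assert (Hn1 : 1 <= INR n) by (apply (le_INR 1); lia).
  assert (HNp : 0 < N) by lra.
  assert (Hs : 0 < sqrt N) by (apply sqrt_lt_R0; lra).
  set (d := 1 / sqrt N).
  assert (Hd : 0 < d) by (apply Rdiv_lt_0_compat; lra).
  assert (Hd2 : d ^ 2 = 1 / N).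
  { unfold d. simpl. rewrite Rmult_1_r. unfold Rdiv. rewrite !Rmult_1_l, <- Rinv_mult, sqrt_sqrt; lra. }
  set (y := a_np1 mu n x).
  assert (Hy : I01 y) by (apply a_I01; auto).
  destruct (g_bounded mu f hmu hf) as [M HM].
  set (w1 := omega g d). set (w2 := omega g (gamma_n mu n)).
  assert (Hw1 : 0 <= w1) by (apply (omega_nonneg g M HM); lra).
  assert (Hg0 : 0 <= gamma_n mu n).
  { unfold gamma_n. eapply Rle_trans; [apply (Rabs_pos (a_np1 mu n 0 - 0))|].
    apply lub_ge with (M := 1). exists 0. split; [unfold I01; lra| auto].
    intros s [z [Hz ->]]. assert (Ha := a_I01 mu n z hmu Hz). unfold I01 in *.
    unfold Rabs; destruct Rcase_abs; lra. }
  assert (Hw2 : 0 <= w2) by (apply (omega_nonneg g M HM); lra).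
  set (Q := fun k => (INR k / N - y) ^ 2 + (INR (k + 1) / N - y) ^ 2).
  set (c := fun k => N * RInt g (INR k / N) (INR (k + 1) / N)).
  assert (Hk : forall k, (k <= n)%nat -> Rabs (c k - g y) <= w1 * (1 + N * Q k)).
  { intros k Hkn. unfold c.
    assert (Hk0 : 0 <= INR k) by apply pos_INR.
    assert (Hkn' : INR k <= INR n) by (apply le_INR; lia).
    rewrite plus_INR. change (INR 1) with 1.
    apply int_step; auto.
    - apply Rdiv_le_0_compat; lra.
    - unfold Rdiv. apply Rmult_le_compat_r; [apply Rlt_le, Rinv_0_lt_compat|]; lra.
    - apply Rmult_le_reg_r with N; auto. unfold Rdiv. rewrite Rmult_assoc, Rinv_l; lra.
    - field; lra.
    - intros t Ht.
      assert (HtI : I01 t).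
      { destruct Ht as [Ht1 Ht2]. split.
        - eapply Rle_trans; [|exact Ht1]. apply Rdiv_le_0_compat; lra.
        - eapply Rle_trans; [exact Ht2|]. apply Rmult_le_reg_r with N; auto.
          unfold Rdiv. rewrite Rmult_assoc, Rinv_l; lra. }
      eapply Rle_trans; [apply (omega_quad g M HM d Hd y t Hy HtI)|].
      fold w1. apply Rmult_le_compat_l; auto.
      rewrite Hd2.
      replace ((t - y) ^ 2 / (1 / N)) with (N * (t - y) ^ 2) by (field; lra).
      apply Rplus_le_compat_l, Rmult_le_compat_l; [lra|].
      unfold Q. rewrite plus_INR. change (INR 1) with 1.
      destruct Ht as [Ht1 Ht2].
      destruct (Rle_dec y t).
      + assert (0 <= (INR k / N - y) ^ 2) by apply pow2_ge_0. nra.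
      + assert (0 <= ((INR k + 1) / N - y) ^ 2) by apply pow2_ge_0. nra. }
  assert (HL := ln_mu_pos mu x hmu Hx).
  assert (HL2 := ln_mu_le mu x hmu Hx).
  assert (Efx : f x = ln_mu mu x * g x) by (unfold g, f_mu; field; lra).
  assert (ELK : LK mu n f x = ln_mu mu x * sum_f_R0 (fun k => p_nk n k y * c k) n) by reflexivity.
  assert (Esum : sum_f_R0 (fun k => p_nk n k y * c k) n =
     sum_f_R0 (fun k => p_nk n k y * (c k - g y)) n + g y).
  { rewrite sum_sub_c, bern_sum1. ring. }
  assert (Bsum : Rabs (sum_f_R0 (fun k => p_nk n k y * (c k - g y)) n) <= 3 / 2 * w1).
  { eapply Rle_trans; [apply sum_f_R0_triangle|].
    eapply Rle_trans.
    { apply (sum_Rle _ (fun k => w1 * p_nk n k y + (w1 * N) * (p_nk n k y * Q k) + 0 * p_nk n k y)).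
      intros k Hkn. cbv beta. rewrite Rabs_mult, Rabs_pos_eq by (apply p_nonneg; exact Hy).
      assert (Hp := p_nonneg n k y Hy).
      assert (A := Hk k Hkn).
      replace (w1 * p_nk n k y + w1 * N * (p_nk n k y * Q k) + 0 * p_nk n k y)
        with (p_nk n k y * (w1 * (1 + N * Q k))) by ring.
      apply Rmult_le_compat_l; auto. }
    rewrite sum_lin3, bern_sum1.
    assert (BQ := bern_Q n y ltac:(lia) Hy). fold N in BQ.
    change (sum_f_R0 (fun k => p_nk n k y * Q k) n) with
      (sum_f_R0 (fun k => p_nk n k y * ((INR k / N - y) ^ 2 + (INR (k + 1) / N - y) ^ 2)) n).
    assert (0 <= w1 * N) by nra.
    assert (N * (1 / (2 * N)) = 1 / 2) by (field; lra).
    nra. }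
  assert (Bgam : Rabs (g y - g x) <= w2).
  { apply (omega_ge g M HM); auto.
    unfold gamma_n. apply lub_ge with (M := 1).
    - exists x. split; auto.
    - intros s [z [Hz ->]]. assert (Ha := a_I01 mu n z hmu Hz). unfold I01 in *.
      unfold Rabs; destruct Rcase_abs; lra. }
  rewrite ELK, Efx, Esum.
  replace (ln_mu mu x * (sum_f_R0 (fun k => p_nk n k y * (c k - g y)) n + g y) - ln_mu mu x * g x)
    with (ln_mu mu x * (sum_f_R0 (fun k => p_nk n k y * (c k - g y)) n + (g y - g x))) by ring.
  rewrite Rabs_mult, (Rabs_pos_eq (ln_mu mu x)) by lra.
  assert (T := Rabs_triang (sum_f_R0 (fun k => p_nk n k y * (c k - g y)) n) (g y - g x)).
  assert (Hsq2 : 1 <= sqrt 2) by (rewrite <- sqrt_1; apply sqrt_le_1_alt; lra).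
  assert (Hinv : 0 <= 1 / (2 * sqrt N)) by (apply Rlt_le, Rdiv_lt_0_compat; lra).
  fold N d g w1 w2.
  assert (Hl0 : 0 < ln (2 + mu)) by lra.
  set (S := Rabs (sum_f_R0 (fun k => p_nk n k y * (c k - g y)) n + (g y - g x))) in *.
  assert (S <= 3/2 * w1 + w2) by lra.
  assert (0 <= S) by apply Rabs_pos.
  apply Rle_trans with (ln (2 + mu) * (3/2 * w1 + w2)).
  - apply Rle_trans with (ln (2 + mu) * S). apply Rmult_le_compat_r; lra.
    apply Rmult_le_compat_l; lra.
  - assert (0 <= w1 * ln (2 + mu) * (1 / (2 * sqrt N) + sqrt 2 - 1 / 2)).
    { apply Rmult_le_pos; [apply Rmult_le_pos|]; lra. }
    lra.
Qed.
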